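(* Let $\mathcal{A}$ be a class of monomorphisms of simplicial sets that is saturated (contains isomorphisms and is closed under composition, transfinite composition, cobase change and retracts) and has the right cancellation property: for monomorphisms $u:A\to B$, $v:B\to C$, if $vu\in\mathcal{A}$ and $u\in\mathcal{A}$ then $v\in\mathcal{A}$. If the inclusion $I_n\subseteq\Delta[n]$ belongs to $\mathcal{A}$ for every $n\ge2$, then every mid anodyne map belongs to $\mathcal{A}$.
   Context: $I_n\subseteq\Delta[n]$ denotes the $n$-chain, the union of the edges $(i,i+1)$ for $0\le i\le n-1$. A mid anodyne map is a map in the saturated class generated by the inner horn inclusions $\Lambda^k[n]\subset\Delta[n]$, $0<k<n$. *)

(* Defs.v *)
From mathcomp Require Import all_boot.
Set Implicit Arguments. Unset Strict Implicit. Unset Printing Implicit Defensive.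

(* A map [m] -> [n] is a monotone map 'I_m.+1 -> 'I_n.+1. *)
Definition monob m n (f : {ffun 'I_m.+1 -> 'I_n.+1}) : bool :=
  [forall i : 'I_m.+1, forall j : 'I_m.+1, (i <= j) ==> (f i <= f j)].

Definition Dmap (m n : nat) := {f : {ffun 'I_m.+1 -> 'I_n.+1} | monob f}.

Lemma monob_id n : monob [ffun i : 'I_n.+1 => i].
Proof. by apply/forallP=> i; apply/forallP=> j; rewrite !ffunE; apply/implyP. Qed.

Definition did n : Dmap n n := exist (@monob n n) _ (monob_id n).

Lemma monob_comp m n p (g : Dmap n p) (f : Dmap m n) :
  monob [ffun i => sval g (sval f i)].
Proof.
apply/forallP=> i; apply/forallP=> j; apply/implyP=> lij; rewrite !ffunE.
have /forallP/(_ i)/forallP/(_ j)/implyP/(_ lij) := svalP f.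
by move=> H; have /forallP/(_ (sval f i))/forallP/(_ (sval f j))/implyP/(_ H) := svalP g.
Qed.

Definition dcomp m n p (g : Dmap n p) (f : Dmap m n) : Dmap m p :=
  exist (@monob m p) _ (monob_comp g f).

Lemma dcomp_idl m n (f : Dmap m n) : dcomp (did n) f = f.
Proof. by apply: val_inj; apply/ffunP=> i; rewrite /= !ffunE. Qed.
Lemma dcomp_idr m n (f : Dmap m n) : dcomp f (did m) = f.
Proof. by apply: val_inj; apply/ffunP=> i; rewrite /= !ffunE. Qed.
Lemma dcompA m n p q (h : Dmap p q) (g : Dmap n p) (f : Dmap m n) :
  dcomp h (dcomp g f) = dcomp (dcomp h g) f.
Proof. by apply: val_inj; apply/ffunP=> i; rewrite /= !ffunE. Qed.

Record sSet := SSet {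
  sx :> nat -> Type;
  sact : forall m n, Dmap m n -> sx n -> sx m;
  sact_id : forall n (x : sx n), sact (did n) x = x;
  sact_comp : forall m n p (f : Dmap m n) (g : Dmap n p) (x : sx p),
      sact (dcomp g f) x = sact f (sact g x) }.
Arguments sact {s m n}.

Record smap (X Y : sSet) := SMap {
  sfun :> forall n : nat, X n -> Y n;
  snat : forall m n (f : Dmap m n) (x : X n), sfun (sact f x) = sact f (sfun x) }.
Arguments sfun {X Y} s n _.

Lemma scomp_nat (X Y Z : sSet) (g : smap Y Z) (f : smap X Y) m n (h : Dmap m n) (x : X n) :
  g m (f m (sact h x)) = sact h (g n (f n x)).
Proof. by rewrite !snat. Qed.

Definition scomp (X Y Z : sSet) (g : smap Y Z) (f : smap X Y) : smap X Z :=
  @SMap X Z (fun n (x : X n) => g n (f n x)) (scomp_nat g f).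

Lemma sid_nat (X : sSet) m n (h : Dmap m n) (x : X n) : sact h x = sact h x.
Proof. by []. Qed.
Definition sid (X : sSet) : smap X X := @SMap X X (fun n (x : X n) => x) (@sid_nat X).

Definition seq (X Y : sSet) (f g : smap X Y) : Prop := forall n (x : X n), f n x = g n x.

Definition mono (X Y : sSet) (f : smap X Y) : Prop := forall n, injective (f n).

Lemma Dsimp_id n m (x : Dmap m n) : dcomp x (did m) = x.
Proof. exact: dcomp_idr. Qed.
Lemma Dsimp_comp n m p q (f : Dmap m p) (g : Dmap p q) (x : Dmap q n) :
  dcomp x (dcomp g f) = dcomp (dcomp x g) f.
Proof. exact: dcompA. Qed.

Definition Dsimp (n : nat) : sSet :=
  @SSet (fun m => Dmap m n) (fun m p f x => dcomp x f) (@Dsimp_id n) (@Dsimp_comp n).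

Definition sub_closed (X : sSet) (P : forall n, X n -> bool) : Prop :=
  forall m n (f : Dmap m n) (x : X n), P n x -> P m (sact f x).

Section Sub.
Local Unset Implicit Arguments.
Variables (X : sSet) (P : forall n, X n -> bool) (HP : sub_closed P).
Definition subsx n := {x : X n | P n x}.
Definition subact m n (f : Dmap m n) (x : subsx n) : subsx m :=
  exist _ (sact f (sval x)) (HP _ _ f _ (svalP x)).
Arguments subact {m n}.
Lemma subact_id n (x : subsx n) : subact (did n) x = x.
Proof.
case: x => x px; rewrite /subact /=.
move: (HP _ _ _ _ _); rewrite sact_id => q; by rewrite (bool_irrelevance q px).
Qed.
Lemma subact_comp m n p (f : Dmap m n) (g : Dmap n p) (x : subsx p) :
  subact (dcomp g f) x = subact f (subact g x).
Proof.
case: x => x px; rewrite /subact /=.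
move: (HP _ _ _ _ _) (HP _ _ _ _ _); rewrite sact_comp => q1 q2; by rewrite (bool_irrelevance q1 q2).
Qed.
Definition subsset : sSet := SSet subact_id subact_comp.
Lemma sincl_nat m n (f : Dmap m n) (x : subsset n) :
  sval (sact f x) = sact f (sval x).
Proof. by []. Qed.
Definition sincl : smap subsset X := @SMap subsset X (fun n (x : subsset n) => sval x) sincl_nat.
End Sub.
Arguments subsset {X P}.
Arguments sincl {X P}.

(* Horn Lambda^k[n] : simplices of Delta[n] missing some vertex j <> k *)
Definition hornP n (k : 'I_n.+1) m (f : Dmap m n) : bool :=
  [exists j : 'I_n.+1, (j != k) && [forall i, sval f i != j]].

Lemma horn_closed n (k : 'I_n.+1) : sub_closed (X := Dsimp n) (@hornP n k).
Proof.
move=> m p f x /existsP [j /andP [jk /forallP H]].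
apply/existsP; exists j; rewrite jk /=; apply/forallP=> i; rewrite ffunE; exact: H.
Qed.

Arguments horn_closed : clear implicits.
Definition horn n (k : 'I_n.+1) : sSet := subsset (horn_closed n k).
Definition horn_incl n (k : 'I_n.+1) : smap (horn k) (Dsimp n) := sincl (horn_closed n k).

(* The n-chain I_n : union of the edges (i, i+1), 0 <= i <= n-1: simplices of
   Delta[n] whose image lies in {i, i+1} for some i < n *)
Definition chainP n m (f : Dmap m n) : bool :=
  [exists i : 'I_n, [forall t, (nat_of_ord (sval f t) == i) || (nat_of_ord (sval f t) == i.+1)]].

Lemma chain_closed n : sub_closed (X := Dsimp n) (@chainP n).
Proof.
move=> m p f x /existsP [i /forallP H].
apply/existsP; exists i; apply/forallP=> t; rewrite ffunE; exact: H.
Qed.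

Arguments chain_closed : clear implicits.
Definition chain n : sSet := subsset (chain_closed n).
Definition chain_incl n : smap (chain n) (Dsimp n) := sincl (chain_closed n).

Definition sclass := forall X Y : sSet, smap X Y -> Prop.

Definition is_iso (X Y : sSet) (f : smap X Y) : Prop :=
  exists g : smap Y X, seq (scomp g f) (sid X) /\ seq (scomp f g) (sid Y).

Definition contains_isos (C : sclass) : Prop :=
  forall X Y (f : smap X Y), is_iso f -> C X Y f.

Definition comp_closed (C : sclass) : Prop :=
  forall X Y Z (f : smap X Y) (g : smap Y Z), C X Y f -> C Y Z g -> C X Z (scomp g f).

Definition is_pushout (A B C' D : sSet) (i : smap A B) (g : smap A C')
    (j : smap C' D) (k : smap B D) : Prop :=
  seq (scomp k i) (scomp j g) /\
  forall (E : sSet) (b : smap B E) (c : smap C' E), seq (scomp b i) (scomp c g) ->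
    (exists d : smap D E, seq (scomp d k) b /\ seq (scomp d j) c) /\
    (forall d d' : smap D E, seq (scomp d k) b -> seq (scomp d j) c ->
        seq (scomp d' k) b -> seq (scomp d' j) c -> seq d d').

Definition cobase_closed (C : sclass) : Prop :=
  forall A B C' D (i : smap A B) (g : smap A C') (j : smap C' D) (k : smap B D),
    is_pushout i g j k -> C A B i -> C C' D j.

Definition is_retract (A B X Y : sSet) (f : smap A B) (g : smap X Y) : Prop :=
  exists (s : smap A X) (r : smap X A) (s' : smap B Y) (r' : smap Y B),
    [/\ seq (scomp r s) (sid A), seq (scomp r' s') (sid B),
        seq (scomp g s) (scomp s' f) & seq (scomp f r) (scomp r' g)].

Definition retract_closed (C : sclass) : Prop :=
  forall A B X Y (f : smap A B) (g : smap X Y), is_retract f g -> C X Y g -> C A B f.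

Definition well_order (I : Type) (lt : I -> I -> Prop) : Prop :=
  [/\ forall i, ~ lt i i,
      forall i j k, lt i j -> lt j k -> lt i k,
      forall i j, [\/ lt i j, i = j | lt j i]
    & well_founded lt].

Definition is_colim (I : Type) (lt : I -> I -> Prop) (X : I -> sSet)
    (xm : forall i j, lt i j -> smap (X i) (X j)) (Y : sSet) (c : forall i, smap (X i) Y) : Prop :=
  (forall i j (h : lt i j), seq (scomp (c j) (xm i j h)) (c i)) /\
  forall (E : sSet) (e : forall i, smap (X i) E),
    (forall i j (h : lt i j), seq (scomp (e j) (xm i j h)) (e i)) ->
    (exists d : smap Y E, forall i, seq (scomp d (c i)) (e i)) /\
    (forall d d' : smap Y E, (forall i, seq (scomp d (c i)) (e i)) ->
        (forall i, seq (scomp d' (c i)) (e i)) -> seq d d').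

Definition is_colim_below (I : Type) (lt : I -> I -> Prop) (X : I -> sSet)
    (xm : forall i j, lt i j -> smap (X i) (X j)) (j : I) : Prop :=
  forall (E : sSet) (e : forall i, lt i j -> smap (X i) E),
    (forall i k (h1 : lt i k) (h2 : lt k j) (h3 : lt i j),
        seq (scomp (e k h2) (xm i k h1)) (e i h3)) ->
    (exists d : smap (X j) E, forall i (h : lt i j), seq (scomp d (xm i j h)) (e i h)) /\
    (forall d d' : smap (X j) E,
        (forall i (h : lt i j), seq (scomp d (xm i j h)) (e i h)) ->
        (forall i (h : lt i j), seq (scomp d' (xm i j h)) (e i h)) -> seq d d').

Definition transfinite_closed (C : sclass) : Prop :=
  forall (I : Type) (lt : I -> I -> Prop) (bot : I) (X : I -> sSet)
    (xm : forall i j, lt i j -> smap (X i) (X j)) (Y : sSet) (c : forall i, smap (X i) Y),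
    well_order lt ->
    (forall i, ~ lt i bot) ->
    (forall i j k (h1 : lt i j) (h2 : lt j k) (h3 : lt i k),
        seq (scomp (xm j k h2) (xm i j h1)) (xm i k h3)) ->
    (forall j, j <> bot -> (forall i, lt i j -> exists k, lt i k /\ lt k j) ->
        @is_colim_below I lt X xm j) ->
    (forall i j (h : lt i j), (forall k, ~ (lt i k /\ lt k j)) -> C _ _ (xm i j h)) ->
    @is_colim I lt X xm Y c ->
    C _ _ (c bot).

Definition saturated (C : sclass) : Prop :=
  [/\ contains_isos C, comp_closed C, transfinite_closed C, cobase_closed C
    & retract_closed C].

Definition right_cancel (C : sclass) : Prop :=
  forall A B D (u : smap A B) (v : smap B D),
    mono u -> mono v -> C A D (scomp v u) -> C A B u -> C B D v.

Definition mid_anodyne (X Y : sSet) (f : smap X Y) : Prop :=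
  forall C : sclass, saturated C ->
    (forall n (k : 'I_n.+1), 0 < k < n -> C _ _ (horn_incl k)) -> C X Y f.

(* Main.v *)
Require Import Defs.
From mathcomp Require Import all_boot.
From mathcomp Require Import zify.
Set Implicit Arguments. Unset Strict Implicit. Unset Printing Implicit Defensive.

Lemma sig_eq (T : Type) (P : T -> bool) (a b : {x : T | P x}) : sval a = sval b -> a = b.
Proof. case: a b => [a pa] [b pb] /= e; subst b; congr exist; exact: bool_irrelevance. Qed.

Lemma A_seq (A : sclass) (HA : saturated A) X Y (f g : smap X Y) : Defs.seq f g -> A X Y f -> A X Y g.
Proof.
case: HA => _ _ _ _ Hr e Af; apply: (Hr _ _ _ _ g f) Af.
exists (sid X), (sid X), (sid Y), (sid Y); split => n x //=; by rewrite e.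
Qed.

Record ssub (X : sSet) := SSub { sp :> forall n, X n -> bool; sp_cl : sub_closed sp }.
Arguments sp_cl {X} s [m n] f x.
Definition ss X (S : ssub X) : sSet := subsset (sp_cl S).
Definition sle X (S S' : ssub X) := forall n (x : X n), S n x -> S' n x.

Definition incl2f X (S S' : ssub X) (H : sle S S') n (x : ss S n) : ss S' n :=
  exist _ (sval x) (H n _ (svalP x)).
Lemma incl2_nat X (S S' : ssub X) (H : sle S S') m n (f : Dmap m n) (x : ss S n) :
  incl2f H (sact f x) = sact f (incl2f H x).
Proof. exact: sig_eq. Qed.
Definition incl2 X (S S' : ssub X) (H : sle S S') : smap (ss S) (ss S') := SMap (incl2_nat H).

Lemma incl2_mono X (S S' : ssub X) (H : sle S S') : mono (incl2 H).
Proof. move=> n x y /(congr1 sval) /= e; exact: sig_eq. Qed.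
Lemma sincl_mono X (S : ssub X) : mono (sincl (sp_cl S)).
Proof. move=> n x y /= e; exact: sig_eq. Qed.

Lemma A_incl2_ext (A : sclass) (HA : saturated A) X (S1 S2 S1' S2' : ssub X)
  (H : sle S1 S2) (H' : sle S1' S2') :
  (forall n x, S1 n x = S1' n x) -> (forall n x, S2 n x = S2' n x) ->
  A _ _ (incl2 H) -> A _ _ (incl2 H').
Proof.
move=> e1 e2; case: (HA) => _ _ _ _ Hr; apply: Hr.
have a1 : sle S1' S1 by move=> n x; rewrite e1.
have a2 : sle S1 S1' by move=> n x; rewrite e1.
have a3 : sle S2' S2 by move=> n x; rewrite e2.
have a4 : sle S2 S2' by move=> n x; rewrite e2.
exists (incl2 a1), (incl2 a2), (incl2 a3), (incl2 a4); split => n x; exact: sig_eq.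
Qed.

Lemma A_incl2_id (A : sclass) (HA : saturated A) X (S : ssub X) (H : sle S S) : A _ _ (incl2 H).
Proof.
case: (HA) => Hi _ _ _ _; apply: Hi; exists (incl2 H); split => n x; exact: sig_eq.
Qed.

Lemma A_incl2_eq (A : sclass) (HA : saturated A) X (S1 S2 : ssub X) (H : sle S1 S2) :
  sle S2 S1 -> A _ _ (incl2 H).
Proof.
move=> H'; have Hid : sle S1 S1 by [].
apply: (A_incl2_ext HA (H := Hid)) => //; last exact: A_incl2_id.
by move=> n x; apply/idP/idP; [apply: H | apply: H'].
Qed.

Lemma A_incl2_comp (A : sclass) (HA : saturated A) X (S1 S2 S3 : ssub X)
  (H12 : sle S1 S2) (H23 : sle S2 S3) (H13 : sle S1 S3) :
  A _ _ (incl2 H12) -> A _ _ (incl2 H23) -> A _ _ (incl2 H13).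
Proof.
move=> a b; case: (HA) => _ Hc _ _ _; have := Hc _ _ _ _ _ a b.
apply: A_seq => // n x; exact: sig_eq.
Qed.

Definition sI X (U V : ssub X) : ssub X.
Proof.
apply: (@SSub X (fun n x => U n x && V n x)).
by move=> m n f x /andP [a b]; apply/andP; split; apply: sp_cl.
Defined.
Definition sU X (U V : ssub X) : ssub X.
Proof.
apply: (@SSub X (fun n x => U n x || V n x)).
by move=> m n f x /orP [a|b]; apply/orP; [left|right]; apply: sp_cl.
Defined.

Definition bdec (b : bool) : {b} + {~~ b} :=
  if b as b0 return {b0} + {~~ b0} then left isT else right isT.

Lemma orNl (u v : bool) : u || v -> ~~ u -> v. Proof. by case: u. Qed.

Definition glue X (U V : ssub X) (E : sSet) (b : smap (ss V) E) (c : smap (ss U) E) n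
  (x : ss (sU U V) n) : E n :=
  match bdec (U n (sval x)) with
  | left h => c n (exist _ (sval x) h)
  | right h => b n (exist _ (sval x) (orNl (svalP x) h))
  end.

Lemma glueU X (U V : ssub X) (E : sSet) (b : smap (ss V) E) (c : smap (ss U) E) n
  (x : ss (sU U V) n) (h : U n (sval x)) : glue b c x = c n (exist _ (sval x) h).
Proof.
rewrite /glue; case: (bdec _) => [h'|h']; last by case/negP: h'.
by congr (c n _); apply: sig_eq.
Qed.

Lemma glueV X (U V : ssub X) (E : sSet) (b : smap (ss V) E) (c : smap (ss U) E) n
  (x : ss (sU U V) n) (hu : ~~ U n (sval x)) (hv : V n (sval x)) :
  glue b c x = b n (exist _ (sval x) hv).
Proof.
rewrite /glue; case: (bdec _) => [h'|h']; first by case/negP: hu.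
by congr (b n _); apply: sig_eq.
Qed.

Lemma pushout_sub X (U V : ssub X) (h1 : sle (sI U V) V) (h2 : sle (sI U V) U)
  (h3 : sle U (sU U V)) (h4 : sle V (sU U V)) :
  is_pushout (incl2 h1) (incl2 h2) (incl2 h3) (incl2 h4).
Proof.
split; first by move=> n x; apply: sig_eq.
move=> E b c agree.
have ag : forall n (x : X n) (hu : U n x) (hv : V n x),
    b n (exist _ x hv) = c n (exist _ x hu).
  move=> n x hu hv.
  set y : ss (sI U V) n := exist _ x (introT andP (conj hu hv)).
  have e1 : incl2f h1 y = exist _ x hv by apply: sig_eq.
  have e2 : incl2f h2 y = exist _ x hu by apply: sig_eq.
  by have := agree n y; rewrite /= e1 e2.
have gnat : forall m n (f : Dmap m n) (x : ss (sU U V) n),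
    glue b c (sact f x) = sact f (glue b c x).
  move=> m n f x; case: (boolP (U n (sval x))) => hu.
    have hu' : U m (sval (sact f x)) by apply: (sp_cl U).
    rewrite (glueU b c hu') (glueU b c hu) -snat; congr (c m _); exact: sig_eq.
  have hv := orNl (svalP x) hu.
  rewrite (glueV b c hu hv) -snat.
  have hv' : V m (sval (sact f x)) by apply: (sp_cl V).
  case: (boolP (U m (sval (sact f x)))) => hu'.
    rewrite (glueU b c hu') -(ag _ _ hu' hv'); congr (b m _); exact: sig_eq.
  rewrite (glueV b c hu' hv'); congr (b m _); exact: sig_eq.
split.
  exists (SMap gnat); split => n x /=.
    case: (boolP (U n (sval x))) => hu.
      rewrite (glueU b c (x := incl2f h4 x) hu) /= -(ag _ _ hu (svalP x)); congr (b n _); exact: sig_eq.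
    rewrite (glueV b c (x := incl2f h4 x) hu (svalP x)); congr (b n _); exact: sig_eq.
  rewrite (glueU b c (x := incl2f h3 x) (svalP x)); congr (c n _); exact: sig_eq.
move=> d d' db dc d'b d'c n x.
case: (boolP (U n (sval x))) => hu.
  have -> : x = incl2 h3 n (exist _ (sval x) hu) by apply: sig_eq.
  by move: (dc n (exist _ (sval x) hu)) (d'c n (exist _ (sval x) hu)) => /= -> ->.
have hv := orNl (svalP x) hu.
have -> : x = incl2 h4 n (exist _ (sval x) hv) by apply: sig_eq.
by move: (db n (exist _ (sval x) hv)) (d'b n (exist _ (sval x) hv)) => /= -> ->.
Qed.

Lemma dmono m n (x : Dmap m n) (t1 t2 : 'I_m.+1) : t1 <= t2 -> sval x t1 <= sval x t2.
Proof. move=> h; exact: (implyP (forallP (forallP (svalP x) t1) t2) h). Qed.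

Lemma chain_spread n m (x : Dmap m n) : 0 < n ->
  chainP x = [forall t1, forall t2, sval x t2 <= (sval x t1).+1].
Proof.
move=> n0; apply/idP/idP.
  case/existsP=> e /forallP H; apply/forallP=> t1; apply/forallP=> t2.
  by move: (H t1) (H t2) => /orP[/eqP a|/eqP a] /orP[/eqP b|/eqP b]; lia.
move=> /forallP H.
have h0 := ltn_ord (sval x ord0).
have He : (if sval x ord0 < n then nat_of_ord (sval x ord0) else (sval x ord0).-1) < n.
  by case: ifP => // _; lia.
apply/existsP; exists (Ordinal He); apply/forallP=> t /=.
have h1 := dmono x (leq0n t : (@ord0 m) <= t).
have h2 := forallP (H ord0) t.
have h3 := ltn_ord (sval x t).
by case: ifP => c; apply/orP; lia.
Qed.

Definition faceS m (i : 'I_m.+1) : ssub (Dsimp m).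
Proof.
apply: (@SSub (Dsimp m) (fun n (x : Dmap n m) => [forall j, sval x j != i])).
by move=> k n f x /forallP H; apply/forallP => j; rewrite /= ffunE; exact: H.
Defined.

Definition XT m (T : nat -> bool) : ssub (Dsimp m).
Proof.
apply: (@SSub (Dsimp m) (fun n (x : Dmap n m) =>
  chainP x || [exists t : 'I_m.+1, T t && [forall j, sval x j != t]])).
move=> k n f x /orP [c|/existsP [t /andP [Tt /forallP H]]]; apply/orP.
  by left; apply: chain_closed.
by right; apply/existsP; exists t; rewrite Tt /=; apply/forallP => j; rewrite ffunE.
Defined.

Definition chainS m : ssub (Dsimp m) := SSub (chain_closed m).

Lemma chain_XT m (T : nat -> bool) : sle (chainS m) (XT m T).
Proof. by move=> n x /= ->. Qed.
Arguments chain_XT : clear implicits.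

Lemma dlt_mono m (i : 'I_m.+2) : monob [ffun j : 'I_m.+1 => lift i j].
Proof. by apply/forallP=> a; apply/forallP=> b; apply/implyP=> h; rewrite !ffunE /= leq_bump2. Qed.
Definition dlt m (i : 'I_m.+2) : Dmap m m.+1 := exist (@monob m m.+1) _ (dlt_mono i).

Definition sgo m (i : 'I_m.+2) (t : 'I_m.+2) : 'I_m.+1 := inord (minn (unbump i t) m).
Lemma sgo_val m (i t : 'I_m.+2) : nat_of_ord (sgo i t) = minn (unbump i t) m.
Proof. by rewrite inordK // ltnS geq_minr. Qed.
Lemma sgm_mono m (i : 'I_m.+2) : monob [ffun t : 'I_m.+2 => sgo i t].
Proof.
apply/forallP=> a; apply/forallP=> b; apply/implyP=> h; rewrite !ffunE !sgo_val /unbump.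
case: (ltnP i a) => ha; case: (ltnP i b) => hb /=; lia.
Qed.
Definition sgm m (i : 'I_m.+2) : Dmap m.+1 m := exist (@monob m.+1 m) _ (sgm_mono i).

Lemma K1 m (i : 'I_m.+2) n (x : Dmap n m.+1) : faceS i n x ->
  dcomp (dlt i) (dcomp (sgm i) x) = x.
Proof.
move=> /forallP H; apply: val_inj; apply/ffunP => t; rewrite /= !ffunE.
apply: val_inj; rewrite /= sgo_val.
have := H t; have := ltn_ord (sval x t); have := ltn_ord i; rewrite /bump /unbump.
move: (sval x t) => a; rewrite -(inj_eq val_inj) /=.
move: (nat_of_ord a) (nat_of_ord i) => a' b.
case: (ltnP b a') => h1 /= h0 h2 h3.
  have e : minn (a' - 1) m = a' - 1 by lia.
  rewrite e (_ : b <= a' - 1) /=; lia.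
have e : minn (a' - 0) m = a' by lia.
rewrite e leqNgt (_ : a' < b) /=; lia.
Qed.


Lemma K2 m (i : 'I_m.+2) n (y : Dmap n m) : dcomp (sgm i) (dcomp (dlt i) y) = y.
Proof.
apply: val_inj; apply/ffunP => t; rewrite /= !ffunE.
apply: val_inj; rewrite /= sgo_val bumpK; by apply/minn_idPl; rewrite -ltnS ltn_ord.
Qed.

Lemma Fdlt m (i : 'I_m.+2) n (y : Dmap n m) : faceS i n (dcomp (dlt i) y).
Proof. by apply/forallP => t; rewrite /= !ffunE eq_sym neq_lift. Qed.

Lemma P1 m (i : 'I_m.+2) (T : nat -> bool) n (x : Dmap n m.+1) : 0 < m -> T i = false ->
  XT m.+1 T n x -> faceS i n x -> XT m (fun t => T (bump i t)) n (dcomp (sgm i) x).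
Proof.
move=> m0 Ti /orP [c|/existsP [t /andP [Tt /forallP H]]] /forallP F; apply/orP.
  left; rewrite chain_spread //; rewrite chain_spread // in c.
  apply/forallP => t1; apply/forallP => t2; rewrite /= !ffunE !sgo_val /unbump.
  have := forallP (forallP c t1) t2; have := F t1; have := F t2.
  rewrite -!(inj_eq val_inj) /=.
  move: (nat_of_ord (sval x t1)) (nat_of_ord (sval x t2)) (nat_of_ord i) => a b j.
  case: (ltnP j a) => h1; case: (ltnP j b) => h2 /=; lia.
have ti : nat_of_ord t != i.
  by apply/negP => /eqP e; move: Tt; rewrite e Ti.
right; apply/existsP; exists (sgo i t); apply/andP; split.
  rewrite sgo_val; have -> : minn (unbump i t) m = unbump i t.
    have := ltn_ord t; have := ltn_ord i; move: ti; rewrite /unbump.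
    move: (nat_of_ord t) (nat_of_ord i) => a b; case: (ltnP b a) => /= h; lia.
  by rewrite unbumpK.
apply/forallP => j; rewrite /= !ffunE -(inj_eq val_inj) /= !sgo_val.
have := H j; have := F j; have := ltn_ord t; have := ltn_ord i; have := ltn_ord (sval x j); move: ti.
rewrite -!(inj_eq val_inj) /= /unbump.
move: (nat_of_ord t) (nat_of_ord i) (nat_of_ord (sval x j)) => a b c.
case: (ltnP b a) => h1; case: (ltnP b c) => h2 /=; lia.
Qed.

Definition spine m (i : 'I_m.+2) (T : nat -> bool) : Prop :=
  i = 0 :> nat \/ i = m.+1 :> nat \/
  exists t, [/\ t < m.+2, T t & (t.+2 <= i) || (i.+2 <= t)].

Lemma P2 m (i : 'I_m.+2) (T : nat -> bool) n (y : Dmap n m) : 0 < m -> spine i T ->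
  XT m (fun t => T (bump i t)) n y -> XT m.+1 T n (dcomp (dlt i) y).
Proof.
move=> m0 sp /orP [c|/existsP [t /andP [Tt /forallP H]]]; apply/orP; last first.
  right; apply/existsP; exists (lift i t); rewrite Tt /=.
  by apply/forallP => j; rewrite !ffunE (inj_eq (@lift_inj _ i)).
case: (boolP [forall t1, forall t2, bump i (sval y t2) <= (bump i (sval y t1)).+1]) => hb.
  left; rewrite chain_spread //; apply/forallP=> t1; apply/forallP => t2; rewrite /= !ffunE /=.
  exact: (forallP (forallP hb t1) t2).
right; move: hb; rewrite negb_forall => /existsP [t1]; rewrite negb_forall => /existsP [t2] hb.
rewrite chain_spread // in c.
have c12 := forallP (forallP c t1) t2.
have c21 := forallP (forallP c t2) t1.
have yt2 := ltn_ord (sval y t2).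
have key : (sval y t1).+1 = i /\ nat_of_ord (sval y t2) = i.
  move: hb c12 c21 yt2; rewrite /bump.
  move: (nat_of_ord (sval y t1)) (nat_of_ord (sval y t2)) (nat_of_ord i) => a b j.
  case: (leqP j a) => h1; case: (leqP j b) => h2 /=; lia.
case: key => k1 k2.
case: sp => [e0 | [em | [t [tlt Tt ht]]]].
- exfalso; lia.
- exfalso; lia.
apply/existsP; exists (Ordinal tlt); rewrite Tt /=.
apply/forallP => j; rewrite !ffunE -(inj_eq val_inj) /=.
have cj1 := forallP (forallP c t1) j.
have cj2 := forallP (forallP c j) t2.
move: cj1 cj2 ht k1 k2; rewrite /bump.
move: (nat_of_ord (sval y t1)) (nat_of_ord (sval y t2)) (nat_of_ord (sval y j)) (nat_of_ord i) => a b d e.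
case: (leqP e d) => h /=; lia.
Qed.

Lemma andl (a b : bool) : a && b -> a. Proof. by case/andP. Qed.
Lemma andr (a b : bool) : a && b -> b. Proof. by case/andP. Qed.

Lemma chain_incl_A (A : sclass) (HA : saturated A)
  (hchain : forall n, 2 <= n -> A _ _ (chain_incl n)) m : 0 < m -> A _ _ (chain_incl m).
Proof.
case: m => // [[|m]] _; last by apply: hchain.
case: (HA) => Hi _ _ _ _; apply: Hi.
have hc : forall n (y : Dmap n 1), chainP y.
  move=> n y; rewrite chain_spread //; apply/forallP=> t1; apply/forallP=> t2.
  have := ltn_ord (sval y t2); lia.
pose gf := fun n (y : Dsimp 1 n) => (exist _ y (hc n y) : chain 1 n).
have gn : forall a b (f : Dmap a b) (y : Dsimp 1 b), gf a (sact f y) = sact f (gf b y).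
  by move=> *; apply: sig_eq.
exists (SMap gn); split => n x; first by apply: sig_eq.
by [].
Qed.

Lemma A_sincl_XT (A : sclass) (HA : saturated A) (Hrc : right_cancel A)
  (hchain : forall n, 2 <= n -> A _ _ (chain_incl n)) m (T : nat -> bool) : 0 < m ->
  A _ _ (incl2 (chain_XT m T)) -> A _ _ (sincl (sp_cl (XT m T))).
Proof.
move=> m0 g; apply: (Hrc _ _ _ (incl2 (chain_XT m T))) => //.
- exact: incl2_mono.
- exact: sincl_mono.
apply: (A_seq HA _ (chain_incl_A HA hchain m0)) => n x; by [].
Qed.

Lemma retr (A : sclass) (HA : saturated A) m (i : 'I_m.+2) (T : nat -> bool)
  (m0 : 0 < m) (Ti : T i = false) (sp : spine i T)
  (h : sle (sI (XT m.+1 T) (faceS i)) (faceS i)) :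
  A _ _ (sincl (sp_cl (XT m (fun t => T (bump i t))))) -> A _ _ (incl2 h).
Proof.
case: (HA) => _ _ _ _ Hr; apply: Hr.
pose sf := fun n (x : ss (sI (XT m.+1 T) (faceS i)) n) =>
  (exist _ (dcomp (sgm i) (sval x)) (P1 m0 Ti (andl (svalP x)) (andr (svalP x)))
    : ss (XT m (fun t => T (bump i t))) n).
have sn : forall a b (f : Dmap a b) x, sf a (sact f x) = sact f (sf b x).
  by move=> a b f x; apply: sig_eq; rewrite /= dcompA.
pose rf := fun n (y : ss (XT m (fun t => T (bump i t))) n) =>
  (exist _ (dcomp (dlt i) (sval y)) (introT andP (conj (P2 m0 sp (svalP y)) (Fdlt i (sval y))))
    : ss (sI (XT m.+1 T) (faceS i)) n).
have rn : forall a b (f : Dmap a b) x, rf a (sact f x) = sact f (rf b x).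
  by move=> a b f x; apply: sig_eq; rewrite /= dcompA.
pose sf' := fun n (x : ss (faceS i) n) => (dcomp (sgm i) (sval x) : Dsimp m n).
have sn' : forall a b (f : Dmap a b) x, sf' a (sact f x) = sact f (sf' b x).
  by move=> a b f x; rewrite /sf' /= dcompA.
pose rf' := fun n (y : Dsimp m n) =>
  (exist _ (dcomp (dlt i) y) (Fdlt i y) : ss (faceS i) n).
have rn' : forall a b (f : Dmap a b) x, rf' a (sact f x) = sact f (rf' b x).
  by move=> a b f x; apply: sig_eq; rewrite /= dcompA.
exists (SMap sn), (SMap rn), (SMap sn'), (SMap rn'); split => n x.
- by apply: sig_eq; rewrite /= K1 // (andr (svalP x)).
- by apply: sig_eq; rewrite /= K1 // (svalP x).
- by [].
- by apply: sig_eq.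
Qed.

Lemma XT_U m (i : 'I_m.+1) (T : nat -> bool) n (x : Dmap n m) :
  sU (XT m T) (faceS i) n x = XT m (fun t => T t || (t == i)) n x.
Proof.
rewrite /=; apply/idP/idP.
  case/orP => [/orP [->//|/existsP [t /andP [Tt H]]]|H]; apply/orP; right; apply/existsP.
    by exists t; rewrite Tt.
  by exists i; rewrite eqxx orbT.
case/orP => [->//|/existsP [t /andP [/orP [Tt|/eqP ti] H]]]; apply/orP.
  by left; apply/orP; right; apply/existsP; exists t; rewrite Tt.
by right; have -> : i = t by apply: val_inj.
Qed.

Lemma step (A : sclass) (HA : saturated A) (Hrc : right_cancel A)
  (hchain : forall n, 2 <= n -> A _ _ (chain_incl n)) m (m0 : 0 < m)
  (i : 'I_m.+2) (T : nat -> bool) (Ti : T i = false) (sp : spine i T) :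
  A _ _ (incl2 (chain_XT m (fun t => T (bump i t)))) ->
  A _ _ (incl2 (chain_XT m.+1 T)) ->
  A _ _ (incl2 (chain_XT m.+1 (fun t => T t || (t == i)))).
Proof.
move=> g1 g2.
have a := A_sincl_XT HA Hrc hchain m0 g1.
have h1 : sle (sI (XT m.+1 T) (faceS i)) (faceS i) by move=> n x /andP [].
have h2 : sle (sI (XT m.+1 T) (faceS i)) (XT m.+1 T) by move=> n x /andP [].
have h3 : sle (XT m.+1 T) (sU (XT m.+1 T) (faceS i)) by move=> n x /= ->.
have h4 : sle (faceS i) (sU (XT m.+1 T) (faceS i)) by move=> n x /= ->; rewrite orbT.
have b := retr HA m0 Ti sp h1 a.
case: (HA) => _ _ _ Hcb _.
have c := Hcb _ _ _ _ _ _ _ _ (pushout_sub h1 h2 h3 h4) b.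
have h5 : sle (XT m.+1 T) (XT m.+1 (fun t => T t || (t == i))).
  by move=> n x hx; rewrite -XT_U; apply/orP; left.
have d : A _ _ (incl2 h5).
  by apply: (A_incl2_ext HA (H := h3)) => // n x; rewrite XT_U.

exact: (A_incl2_comp HA _ g2 d).
Qed.

Lemma good_ext (A : sclass) (HA : saturated A) m (T T' : nat -> bool) :
  (forall t, t < m.+1 -> T t = T' t) ->
  A _ _ (incl2 (chain_XT m T)) -> A _ _ (incl2 (chain_XT m T')).
Proof.
move=> E; apply: A_incl2_ext => // n x /=; congr orb.
by apply: eq_existsb => t; rewrite E.
Qed.

Lemma good_empty (A : sclass) (HA : saturated A) m :
  A _ _ (incl2 (chain_XT m (fun _ => false))).
Proof.
apply: A_incl2_eq => // n x /= /orP [//|/existsP [t //]].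
Qed.

Lemma good_one (A : sclass) (HA : saturated A) (T : nat -> bool) :
  A _ _ (incl2 (chain_XT 1 T)).
Proof.
apply: A_incl2_eq => // n x _ /=; rewrite chain_spread //.
apply/forallP=> t1; apply/forallP=> t2; have := ltn_ord (sval x t2); lia.
Qed.

Definition fam (a b : nat) := fun t => (t < a) || (b < t).

Definition Sm (A : sclass) m :=
  [/\ A _ _ (incl2 (chain_XT m (fun _ => false))),
      A _ _ (incl2 (chain_XT m (fun t => t == 0)))
    & forall a b, 1 <= a -> a <= b -> b < m -> A _ _ (incl2 (chain_XT m (fam a b)))].

Lemma S_all (A : sclass) (HA : saturated A) (Hrc : right_cancel A)
  (hchain : forall n, 2 <= n -> A _ _ (chain_incl n)) m : 0 < m -> Sm A m.
Proof.
elim: m => // m IH _; case: m IH => [_|m IH].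
  split; [exact: (good_empty HA 1)|exact: (good_one HA _)|move=> a b; lia].
have [I0 I1 I2] := IH isT.
have st := @step A HA Hrc hchain m.+1 isT.
have G1 : A _ _ (incl2 (chain_XT m.+2 (fun t => t == 0))).
  have := st ord0 (fun _ => false) erefl (or_introl erefl) I0 (good_empty HA _).
  by apply: (good_ext HA) => t _.
split => //; first exact: (good_empty HA _).
move=> a b a1 ab bm.
have G2 : A _ _ (incl2 (chain_XT m.+2 (fam 1 m.+1))).
  have H := st ord_max (fun t => t == 0) erefl (or_intror (or_introl erefl)).
  have Hs : A _ _ (incl2 (chain_XT m.+1 (fun t => bump (@ord_max m.+2) t == 0))).
    by apply: (good_ext HA _ I1) => t ht; rewrite /bump /=; lia.
  have := H Hs G1; apply: (good_ext HA) => t ht; rewrite /fam /=; lia.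
have G3 : forall p, 1 <= p -> p <= a -> A _ _ (incl2 (chain_XT m.+2 (fam p m.+1))).
  elim=> // p IHp _ hp; case: p IHp hp => [_ _|p IHp hp]; first exact: G2.
  have hp' : p.+1 < m.+3 by lia.
  have Ti : fam p.+1 m.+1 (Ordinal hp') = false by rewrite /fam /=; lia.
  have sp : spine (Ordinal hp') (fam p.+1 m.+1).
    right; right; exists m.+2; split => //; rewrite /fam /=; lia.
  have H := st (Ordinal hp') (fam p.+1 m.+1) Ti sp.
  have Hs : A _ _ (incl2 (chain_XT m.+1 (fun t => fam p.+1 m.+1 (bump (Ordinal hp') t)))).
    apply: (good_ext HA _ (I2 p.+1 m _ _ _)) => [t ht|||]; try lia.
    by rewrite /fam /bump /=; lia.
  have := H Hs (IHp isT (ltnW hp)); apply: (good_ext HA) => t ht; rewrite /fam /=; lia.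
have G4 : forall d, d <= m.+1 - b -> A _ _ (incl2 (chain_XT m.+2 (fam a (m.+1 - d)))).
  elim=> [_|d IHd hd]; first by rewrite subn0; exact: G3.
  have hq : m.+1 - d < m.+3 by lia.
  have Ti : fam a (m.+1 - d) (Ordinal hq) = false by rewrite /fam /=; lia.
  have sp : spine (Ordinal hq) (fam a (m.+1 - d)).
    right; right; exists 0; split => //; rewrite /fam /=; lia.
  have H := st (Ordinal hq) (fam a (m.+1 - d)) Ti sp.
  have Hs : A _ _ (incl2 (chain_XT m.+1 (fun t => fam a (m.+1 - d) (bump (Ordinal hq) t)))).
    apply: (good_ext HA _ (I2 a (m - d) _ _ _)) => [t ht|||]; try lia.
    by rewrite /fam /bump /=; lia.
  have := H Hs (IHd (ltnW hd)); apply: (good_ext HA) => t ht; rewrite /fam /=; lia.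
have := G4 (m.+1 - b) (leqnn _).
by apply: (good_ext HA) => t _; rewrite /fam (_ : m.+1 - (m.+1 - b) = b) //; lia.
Qed.

Lemma XT_horn n (k : 'I_n.+1) : 0 < k < n -> forall p (x : Dmap p n),
  XT n (fam k k) p x = hornP k x.
Proof.
move=> /andP [k0 kn] p x; apply/idP/idP.
  case/orP => [/existsP [e /forallP H]|/existsP [t /andP [Tt H]]]; apply/existsP.
    exists (if nat_of_ord e == 0 then ord_max else ord0); apply/andP; split.
      by case: (boolP (nat_of_ord e == 0)) => ee /=; apply/eqP => /(congr1 val) /=; lia.
    apply/forallP => j; have := H j; have := ltn_ord e.
    by case: (boolP (nat_of_ord e == 0)) => ee /= h1 h2; apply/eqP => /(congr1 val) /=; lia.
  exists t; rewrite H andbT; move: Tt; rewrite /fam -(inj_eq val_inj) /=; lia.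
case/existsP => j /andP [jk H]; apply/orP; right; apply/existsP; exists j.
by rewrite H andbT; move: jk; rewrite /fam -(inj_eq val_inj) /=; lia.
Qed.

Unset Implicit Arguments.
Theorem lemma3p5 (A : sclass) :
  (forall X Y (f : smap X Y), A X Y f -> mono f) ->
  saturated A ->
  right_cancel A ->
  (forall n, 2 <= n -> A _ _ (chain_incl n)) ->
  forall X Y (f : smap X Y), mid_anodyne f -> A X Y f.
Proof.
move=> _ HA Hrc hchain X Y f mf; apply: mf => // n k /andP [k0 kn].
have n2 : 2 <= n by lia.
have kk : 0 < k < n by rewrite k0 kn.
have [_ _ I2] := S_all HA Hrc hchain (ltnW n2).
have G := I2 k k k0 (leqnn _) kn.
pose hS : ssub (Dsimp n) := SSub (horn_closed n k).
have hs : sle (chainS n) hS.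
  by move=> p x c; rewrite /= -(XT_horn kk); apply/orP; left.
have Au : A _ _ (incl2 hs).
  by apply: (A_incl2_ext HA hs _ _ G) => // p x; rewrite (XT_horn kk).
apply: (Hrc _ _ _ (incl2 hs) (sincl (sp_cl hS))) => //.
- exact: incl2_mono.
- exact: sincl_mono.
by apply: (A_seq HA _ (hchain n n2)) => p x.
Qed.
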